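(* Let $L$ be a regular language over a nonempty finite alphabet $A$, and let $\mathcal{A}_L$ be the minimal automaton of $L$. Then the following four conditions are equivalent: (1) $\mathcal{A}_L$ is a zero automaton; (2) $L$ is a language with zero, i.e. the syntactic monoid of $L$ has a zero element; (3) $L$ obeys the zero-one law, i.e. $\mu(L)=\lim_{n\to\infty}\mu_n(L)$ exists and $\mu(L)\in\{0,1\}$; (4) $L$ is recognised by a quasi-zero automaton.
   Context: All automata are complete, deterministic, finite and accessible: $\mathcal{A}=\langle Q,A,\cdot,q_0,F\rangle$ with transition function $\cdot:Q\times A\to Q$ extended to words, and $L(\mathcal{A})=\{w\in A^*: q_0\cdot w\in F\}$. For a language $L\subseteq A^*$, $\mu_n(L)=|L\cap A^n|/|A|^n$ and $\mu(L)=\lim_{n\to\infty}\mu_n(L)$ when the limit exists; $L$ obeys the zero-one law (is a zero-one language) if $L$ is regular, $\mu(L)$ exists and $\mu(L)\in\{0,1\}$. The syntactic monoid of $L$ is $A^*/\sim_L$ where $u\sim_L v$ iff for all $x,y\in A^*$, $xuy\in L\Leftrightarrow xvy\in L$. An element $0$ of a monoid $M$ is a zero if $0m=m0=0$ for all $m\in M$. A state $q$ is a sink state if $q\cdot a=q$ for all $a\in A$. A word $w$ is synchronising for $\mathcal{A}$ if there is a state $q$ with $p\cdot w=q$ for all $p\in Q$; $\mathcal{A}$ is synchronising if it has a synchronising word. A zero automaton is a synchronising automaton having a sink state. A strongly connected sink component of $\mathcal{A}$ is a nonempty set $P\subseteq Q$ such that every state of $P$ is reachable (by some word) from every other state of $P$,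 and no state outside $P$ is reachable from a state of $P$; $\mathrm{Sink}(\mathcal{A})$ denotes the family of all strongly connected sink components. $\mathcal{A}$ is quasi-zero if either $\bigcup\mathrm{Sink}(\mathcal{A})\subseteq F$ or $\bigcup\mathrm{Sink}(\mathcal{A})\cap F=\emptyset$. *)

(* Defs.v *)
From HB Require Import structures.
From mathcomp Require Import all_boot all_order all_algebra.
Set Implicit Arguments. Unset Strict Implicit.
 Unset Printing Implicit Defensive.
Import Order.TTheory GRing.Theory Num.Theory.

Record dfa (A : finType) := DFA {
  state : finType;
  init : state;
  trans : state -> A -> state;
  final : pred state }.
Arguments init {A} d.
Arguments trans {A d} _ _.
Arguments final {A} d _.

Section Automata.
Variable A : finType.
Implicit Types (M : dfa A) (L : seq A -> bool).

Definition delta_star M (q : state M) (w : seq A) : state M := foldl (@trans A M) q w.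

Definition accepts M (w : seq A) : bool := final M (delta_star (init M) w).

Definition recognizes M L : Prop := forall w, accepts M w = L w.

Definition accessible M : Prop := forall q : state M, exists w, delta_star (init M) w = q.

Definition regular L : Prop := exists M : dfa A, accessible M /\ recognizes M L.

Definition minimal_automaton_of M L : Prop :=
  [/\ accessible M, recognizes M L &
      forall M' : dfa A, accessible M' -> recognizes M' L -> #|state M| <= #|state M'| ].

Definition sink_state M (q : state M) : Prop := forall a, trans q a = q.

Definition synchronising_word M (w : seq A) : Prop :=
  exists q : state M, forall p : state M, delta_star p w = q.

Definition synchronising M : Prop := exists w, synchronising_word M w.

Definition zero_automaton M : Prop := synchronising M /\ exists q : state M, sink_state q.

Definition syntactic_eq L (u v : seq A) : Prop :=
  forall x y : seq A, L (x ++ u ++ y) = L (x ++ v ++ y).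

Definition language_with_zero L : Prop :=
  exists z : seq A, forall m : seq A,
    syntactic_eq L (z ++ m) z /\ syntactic_eq L (m ++ z) z.

Definition mu_n L (n : nat) : rat :=
  (#|[set w : n.-tuple A | L w]|%:R / (#|A| ^ n)%:R)%R.

Definition converges (u : nat -> rat) (l : rat) : Prop :=
  forall eps : rat, (0 < eps)%R -> exists N, forall n, N <= n -> (`|u n - l| < eps)%R.

Definition zero_one_language L : Prop :=
  regular L /\ (converges (mu_n L) 0%R \/ converges (mu_n L) 1%R).

Definition reachable M (p q : state M) : Prop := exists w, delta_star p w = q.

Definition strongly_connected_sink_component M (P : {set state M}) : Prop :=
  [/\ P != set0,
      (forall p q, p \in P -> q \in P -> reachable p q) &
      (forall p q, p \in P -> reachable p q -> q \in P)].

Definition in_sink_union M (q : state M) : Prop :=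
  exists P : {set state M}, strongly_connected_sink_component P /\ q \in P.

Definition quasi_zero M : Prop :=
  (forall q : state M, in_sink_union q -> final M q) \/
  (forall q : state M, in_sink_union q -> ~~ final M q).

End Automata.

(* Main.v *)
Require Import Defs.
From HB Require Import structures.
From mathcomp Require Import all_boot all_order all_algebra.
From mathcomp Require Import zify ring lra.
From Stdlib Require Import ClassicalEpsilon.
Import Order.TTheory GRing.Theory Num.Theory.
Set Implicit Arguments. Unset Strict Implicit. Unset Printing Implicit Defensive.

Section S.
Variable A : finType.
Implicit Types M : dfa A.

Lemma delta_cat M (q : state M) u v : delta_star q (u ++ v) = delta_star (delta_star q u) v.
Proof. by rewrite /delta_star foldl_cat. Qed.

Fixpoint cnt M (S : pred (state M)) (q : state M) (n : nat) : nat :=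
  if n is n'.+1 then \sum_(a : A) cnt S (trans q a) n' else (S q : nat).

Lemma sum_tupleS (F : seq A -> nat) n :
  \sum_(w : n.+1.-tuple A) F w = \sum_(a : A) \sum_(w : n.-tuple A) F (a :: w).
Proof.
rewrite pair_big /=.
rewrite (reindex (fun p : A * n.-tuple A => [tuple of p.1 :: p.2])) /=; last first.
  exists (fun t : n.+1.-tuple A => (thead t, [tuple of behead t])).
    by move=> [a t] _ /=; congr pair; apply: val_inj.
  move=> t _; apply: val_inj => /=. by case: t => [[|a s] //=].
by apply: eq_bigr => [[a t]].
Qed.

Lemma sum_tuple0 (F : seq A -> nat) :
  \sum_(w : 0.-tuple A) F w = F [::].
Proof.
rewrite (big_pred1 [tuple]) // => t /=.
by apply/esym/eqP/val_inj; rewrite /= (size0nil (size_tuple t)).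
Qed.

Lemma cnt_tuple M S (q : state M) n :
  cnt S q n = \sum_(w : n.-tuple A) (S (delta_star q w) : nat).
Proof.
elim: n q => [|n IH] q /=; first by rewrite (sum_tuple0 (fun w => (S (delta_star q w) : nat))).
rewrite (sum_tupleS (fun w => (S (delta_star q w) : nat))); apply: eq_bigr => a _; exact: IH.
Qed.


Lemma cnt_ext M (S S' : pred (state M)) q n : S =1 S' -> cnt S q n = cnt S' q n.
Proof.
move=> e; elim: n q => [|n IH] q /=; first by rewrite e.
by apply: eq_bigr => a _; rewrite IH.
Qed.

Lemma cnt_mono M (S S' : pred (state M)) q n :
  (forall r, S r -> S' r) -> cnt S q n <= cnt S' q n.
Proof.
move=> e; elim: n q => [|n IH] q /=.
  by case: (boolP (S q)) => // /e ->.
by apply: leq_sum => a _; rewrite IH.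
Qed.

Lemma cnt_compl M (S : pred (state M)) q n :
  cnt S q n + cnt (predC S) q n = #|A| ^ n.
Proof.
elim: n q => [|n IH] q /=; first by case: (S q).
rewrite -big_split /= (eq_bigr (fun _ => #|A| ^ n)) ?sum_nat_const ?expnS //.
Qed.

Lemma cnt_le M (S : pred (state M)) q n : cnt S q n <= #|A| ^ n.
Proof. by rewrite -(cnt_compl S q n) leq_addr. Qed.

Lemma cnt_comp M (S : pred (state M)) q m n :
  cnt S q (m + n) = \sum_(r : state M) cnt (pred1 r) q m * cnt S r n.
Proof.
elim: m q => [|m IH] q /=.
  rewrite (bigD1 q) //= eqxx mul1n big1 ?addn0 // => r /negbTE.
  by rewrite eq_sym => ->.
rewrite ?addSn /=.
rewrite (eq_bigr (fun a => \sum_r cnt (pred1 r) (trans q a) m * cnt S r n)); last first.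
  by move=> a _; rewrite IH.
rewrite exchange_big /=; apply: eq_bigr => r _.
by rewrite big_distrl.
Qed.

Lemma cnt_pos M (S : pred (state M)) q w : S (delta_star q w) -> 0 < cnt S q (size w).
Proof.
elim: w q => [|a w IH] q /=; first by move=> ->.
move=> h; rewrite (bigD1 a) //=; rewrite ltn_addr //; exact: IH.
Qed.

Lemma cnt_pos_reach M (r q : state M) n : 0 < cnt (pred1 r) q n -> exists w, delta_star q w = r.
Proof.
elim: n q => [|n IH] q /=.
  by case: eqP => // <- _; exists [::].
rewrite lt0n sum_nat_eq0 negb_forall => /existsP /= [a]; rewrite -lt0n => /IH [w hw].
by exists (a :: w).
Qed.


Definition edge M : rel (state M) := fun p q => [exists a, trans p a == q].

Lemma reach_connect M (p q : state M) : reachable p q <-> connect (@edge M) p q.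
Proof.
split.
  move=> [w <-]; elim: w p => [|a w IH] p /=; first exact: connect0.
  apply: connect_trans (IH (trans p a)); apply: connect1.
  by apply/existsP; exists a.
move/connectP => [s pth ->]; elim: s p pth => [|r s IH] p /=.
  by move=> _; exists [::].
case/andP => /existsP [a /eqP <-] /IH [w hw]; by exists (a :: w).
Qed.

Definition Ub M (q : state M) : bool :=
  [forall r, connect (@edge M) q r ==> connect (@edge M) r q].

Lemma Ub_sink M (q : state M) : in_sink_union q <-> Ub q.
Proof.
split.
  move=> [P [[_ hsc hcl] hq]]; apply/forallP => r; apply/implyP => /reach_connect hr.
  by apply/reach_connect; apply: hsc => //; exact: hcl hr.
move=> hU; exists [set r | connect (@edge M) q r]; split; last by rewrite inE connect0.
split.
- by apply/set0Pn; exists q; rewrite inE connect0.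
- move=> p r; rewrite !inE => hp hr; apply/reach_connect.
  apply: connect_trans hr; exact: (implyP (forallP hU p)).
- move=> p r; rewrite !inE => hp /reach_connect hr; exact: connect_trans hr.
Qed.

Lemma Ub_trans M (q : state M) a : Ub q -> Ub (trans q a).
Proof.
move=> hU; apply/forallP => r; apply/implyP => hr.
have hqa : connect (@edge M) q (trans q a) by apply: connect1; apply/existsP; exists a.
exact: (connect_trans (implyP (forallP hU r) (connect_trans hqa hr)) hqa).
Qed.

Lemma Ub_delta M (q : state M) w : Ub q -> Ub (delta_star q w).
Proof. elim: w q => [|a w IH] q //= h; apply: IH; exact: Ub_trans. Qed.

Lemma reach_Ub M (q : state M) : exists w, Ub (delta_star q w).
Proof.
pose R r := [set x | connect (@edge M) r x].
case: (@arg_minnP _ q (connect (@edge M) q) (fun r => #|R r|) (connect0 _ _)) => r hqr hmin.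
have hU : Ub r.
  apply/forallP => x; apply/implyP => hrx.
  have sub : R x \subset R r.
    by apply/subsetP => y; rewrite !inE; exact: connect_trans.
  have eqR : R x = R r.
    apply/eqP; rewrite eqEcard sub /=; apply: hmin; exact: connect_trans hrx.
  have : r \in R r by rewrite inE connect0.
  by rewrite -eqR inE.
by case/reach_connect: hqr => w hw; exists w; rewrite hw.
Qed.

Lemma Ub_cnt0 M (q : state M) n : Ub q -> cnt (predC (@Ub M)) q n = 0.
Proof.
elim: n q => [|n IH] q /= h; first by rewrite h.
by rewrite big1 // => a _; apply: IH; exact: Ub_trans.
Qed.


Lemma nat_bern b j : j * b ^ j <= b * b.+1 ^ j.
Proof.
suff : b ^ j.+1 + j * b ^ j <= b * b.+1 ^ j by apply: leq_trans; rewrite leq_addl.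
elim: j => [|j IH]; first by rewrite expn1 !expn0 mul0n addn0 muln1.
have h : b ^ j <= b.+1 ^ j by elim: (j) => [|k hk]; rewrite ?expn0 // !expnS leq_mul.
rewrite !expnS. set x := b ^ j in IH h *. set y := b.+1 ^ j in IH h *.
rewrite expnS -/x in IH *. nia.
Qed.

Definition frac0 (f : nat -> nat) : Prop :=
  forall eps : rat, (0 < eps)%R -> exists N0, forall n, N0 <= n ->
    ((f n)%:R < eps * (#|A| ^ n)%:R)%R.

Section Decay.
Variables (M : dfa A) (a0 : A).
Let wq (q : state M) : seq A := xchoose (reach_Ub q).
Let K := (\max_(q : state M) size (wq q)).+1.
Let N := #|A|.
Let b := (N ^ K).-1.
Let D n := \max_(r : state M) cnt (predC (@Ub M)) r n.

Lemma NK_gt0 : 0 < N ^ K.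
Proof. by rewrite expn_gt0 /N; apply/orP; left; apply/card_gt0P; exists a0. Qed.

Lemma cnt_U_K q : 0 < cnt (@Ub M) q K.
Proof.
have hs : size (wq q) <= K by apply: leqW; exact: (leq_bigmax (F := fun q => size (wq q)) q).
pose w := wq q ++ nseq (K - size (wq q)) a0.
have -> : K = size w by rewrite size_cat size_nseq subnKC.
apply: cnt_pos; rewrite delta_cat; apply: Ub_delta.
exact: (xchooseP (reach_Ub q)).
Qed.

Lemma stepK q n : cnt (predC (@Ub M)) q (K + n) <= b * D n.
Proof.
rewrite cnt_comp.
apply: (@leq_trans (\sum_r cnt (pred1 r) q K * ((predC (@Ub M)) r * D n))).
  apply: leq_sum => r _; rewrite [(predC _) r]/=; case hr: (Ub r).
    by rewrite Ub_cnt0 // muln0.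
  rewrite mul1n leq_mul2l /D; apply/orP; right.
  exact: (leq_bigmax (F := fun r => cnt (predC (@Ub M)) r n) r).
rewrite (eq_bigr (fun r => (cnt (pred1 r) q K * cnt (predC (@Ub M)) r 0) * D n)); last first.
  by move=> r _; rewrite mulnA.
rewrite -big_distrl -cnt_comp addn0 leq_mul2r; apply/orP; right.
have := cnt_compl (@Ub M) q K; have := cnt_U_K q. rewrite /b /N.
move: (cnt (@Ub M) q K) (cnt (predC (@Ub M)) q K) => u v. lia.
Qed.

Lemma D_le n : D n <= N ^ n.
Proof. by apply/bigmax_leqP => r _; exact: cnt_le. Qed.

Lemma Dbound j i : D (j * K + i) <= b ^ j * N ^ i.
Proof.
elim: j => [|j IH]; first by rewrite mul0n add0n expn0 mul1n D_le.
rewrite mulSn -addnA expnS -mulnA.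
apply: (@leq_trans (b * D (j * K + i))); last by rewrite leq_mul2l IH orbT.
by apply/bigmax_leqP => r _; exact: stepK.
Qed.

Lemma Dfinal n : (n %/ K) * D n <= b * N ^ n.
Proof.
have e := divn_eq n K.
set j := n %/ K in e *; set i := n %% K in e *.
rewrite e.
apply: (@leq_trans (j * (b ^ j * N ^ i))); first by rewrite leq_mul2l Dbound orbT.
rewrite expnD [j * K]mulnC expnM !mulnA.
have hb : b.+1 = N ^ K by rewrite /b prednK // NK_gt0.
by rewrite -hb leq_mul2r nat_bern orbT.
Qed.

Lemma decay q : frac0 (cnt (predC (@Ub M)) q).
Proof.
move=> eps heps.
have hK : 0 < K by [].
pose J := (Num.Def.archi_bound ((b%:R : rat) / eps)%R).+1.
exists (J * K) => n hn.
have hj : J <= n %/ K by rewrite -(mulnK J hK) leq_div2r.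
have h1 : J * cnt (predC (@Ub M)) q n <= b * N ^ n.
  apply: leq_trans (Dfinal n); apply: leq_mul => //; exact: leq_bigmax.
have hb : ((b%:R : rat) / eps < J%:R)%R.
  rewrite /J -addn1 natrD; apply: ltr_wpDr => //.
  apply: archi_boundP; apply: divr_ge0 => //; exact: ltW.
rewrite ltr_pdivrMr // in hb.
have hP : (0 < (N ^ n)%:R :> rat)%R.
  by rewrite ltr0n expn_gt0 /N; apply/orP; left; apply/card_gt0P; exists a0.
have hJ : (0 < J%:R :> rat)%R by rewrite ltr0n.
move: h1; rewrite -(ler_nat rat) !natrM.
have hc : (0 <= (cnt (predC (@Ub M)) q n)%:R :> rat)%R by rewrite ler0n.
move: hc hP hb hJ.
move: ((cnt (predC (@Ub M)) q n)%:R)%R ((N ^ n)%:R)%R ((J%:R)%R : rat) => c P j hc hP hb hJ h1.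
nra.
Qed.

End Decay.


Lemma cnt_pred0 M (q : state M) n : cnt pred0 q n = 0.
Proof. by elim: n q => [|n IH] q //=; rewrite big1 // => a _; rewrite IH. Qed.

Lemma cnt_predT M (q : state M) n : cnt predT q n = #|A| ^ n.
Proof.
rewrite -(cnt_compl predT q n) (@cnt_ext _ (predC predT) pred0) ?cnt_pred0 ?addn0 //.
Qed.

Lemma H2 M (a0 : A) (S : pred (state M)) :
  accessible M -> frac0 (cnt (predC S) (init M)) -> forall p, Ub p -> S p.
Proof.
move=> acc hf p hp; apply/negPn/negP => hnS.
case: (acc p) => u hu; set k := size u.
have hv : forall r, exists v, connect (@edge M) p r ==> (delta_star r v == p).
  move=> r; case: (boolP (connect (@edge M) p r)) => h; last by exists [::].
  have := implyP (forallP hp r) h; case/reach_connect => v hv.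
  by exists v; rewrite hv eqxx.
pose v r := xchoose (hv r).
pose l r := size (v r).
pose K' := \max_r l r.
pose Q := #|state M|.
pose N := #|A|.
have hN : 0 < N by apply/card_gt0P; exists a0.
have hQ : 0 < Q by apply/card_gt0P; exists p.
have win : forall n, exists t, [/\ n <= t, t <= n + K' & N ^ n <= Q * cnt (pred1 p) p t].
  move=> n.
  have hX : forall r, cnt (pred1 r) p n <= cnt (pred1 p) p (n + l r).
    move=> r; rewrite cnt_comp (bigD1 r) //=.
    apply: leq_trans (leq_addr _ _).
    case h0: (cnt (pred1 r) p n) => [//|c]; rewrite -h0.
    have : 0 < cnt (pred1 r) p n by rewrite h0.
    case/cnt_pos_reach => w hw.
    have hc : connect (@edge M) p r by apply/reach_connect; exists w.
    have := implyP (xchooseP (hv r)) hc; rewrite -/(v r) => /eqP hvr.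
    have : 0 < cnt (pred1 p) r (l r) by apply: cnt_pos; rewrite hvr /=.
    by case: (cnt (pred1 p) r (l r)) => // d _; rewrite mulnS leq_addr.
  have [rs hrs] := bigop.eq_bigmax (fun r => cnt (pred1 p) p (n + l r)) hQ.
  exists (n + l rs); split; first by rewrite leq_addr.
    by rewrite leq_add2l; exact: (leq_bigmax (F := l) rs).
  rewrite -(cnt_predT p n) -(addn0 n) cnt_comp addn0.
  rewrite -hrs -sum_nat_const.
  apply: leq_sum => r _; rewrite /= muln1.
  apply: leq_trans (hX r) _.
  exact: (leq_bigmax (F := fun r => cnt (pred1 p) p (n + l r)) r).
pose C := N ^ k * N ^ K' * Q.
have hC : 0 < C by rewrite !muln_gt0 !expn_gt0 hN hQ.
have big : forall n, exists m, n <= m /\ N ^ m <= C * cnt (predC S) (init M) m.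
  move=> n; have [t [ht0 ht hc]] := win n.
  exists (k + t); split; first exact: leq_trans ht0 (leq_addl _ _).
  have h1 : cnt (pred1 p) p t <= cnt (predC S) (init M) (k + t).
    rewrite cnt_comp (bigD1 p) //=; apply: leq_trans (leq_addr _ _).
    have hk : 0 < cnt (pred1 p) (init M) k by rewrite /k; apply: cnt_pos; rewrite hu /=.
    apply: leq_trans (leq_pmull _ hk).
    by apply: cnt_mono => r /eqP ->.
  have h2 : N ^ t <= N ^ n * N ^ K' by rewrite -expnD leq_pexp2l.
  rewrite expnD /C -!mulnA leq_mul2l; apply/orP; right.
  apply: leq_trans h2 _; rewrite mulnC leq_mul2l; apply/orP; right.
  apply: leq_trans hc _; rewrite leq_mul2l; apply/orP; right; exact: h1.
have hCr : (0 < (C%:R : rat))%R by rewrite ltr0n.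
have hCi : (0 < (C%:R : rat)^-1)%R by rewrite invr_gt0.
have [N0 hN0] := hf _ hCi.
have [m [hm1 hm2]] := big N0.
have := hN0 m hm1; rewrite ltr_pdivlMl // -natrM ltr_nat.
by rewrite ltnNge hm2.
Qed.


Definition sequiv M (p q : state M) : Prop :=
  forall w, final M (delta_star p w) = final M (delta_star q w).

Lemma sequiv_delta M (p q : state M) u : sequiv p q -> sequiv (delta_star p u) (delta_star q u).
Proof. by move=> h w; rewrite -!delta_cat h. Qed.

Section Quot.
Variables (M : dfa A) (L : seq A -> bool).
Hypothesis acc : accessible M.
Hypothesis rec : recognizes M L.

Definition eqbs (p q : state M) : bool :=
  if excluded_middle_informative (sequiv p q) then true else false.

Lemma eqbsP p q : reflect (sequiv p q) (eqbs p q).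
Proof. by rewrite /eqbs; case: excluded_middle_informative => h; constructor. Qed.

Definition rep (x : state M) : state M := odflt x [pick y | eqbs x y].

Lemma rep_equiv x : sequiv x (rep x).
Proof.
rewrite /rep; case: pickP => [z /eqbsP h|_] w //; exact: h.
Qed.

Lemma rep_eq x y : sequiv x y -> rep x = rep y.
Proof.
move=> h; rewrite /rep.
have e : [pick z | eqbs x z] = [pick z | eqbs y z].
  apply: eq_pick => z; apply/eqbsP/eqbsP => h' w.
    by rewrite -h'.
  by rewrite h.
rewrite e; case: pickP => [//|h0].
have := h0 y; have -> : eqbs y y by apply/eqbsP.
by [].
Qed.

Lemma rep_idem x : rep (rep x) == rep x.
Proof. apply/eqP/esym/rep_eq; exact: rep_equiv. Qed.

Definition Qs := {x : state M | rep x == x}.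

Definition fq (x : state M) : Qs := exist _ (rep x) (rep_idem x).

Lemma fq_eq x y : sequiv x y -> fq x = fq y.
Proof. by move=> h; apply: val_inj; rewrite /= (rep_eq h). Qed.

Definition Mq : dfa A := @DFA A Qs (fq (init M))
   (fun y a => fq (trans (sval y) a)) (fun y => final M (sval y)).


Lemma Mq_delta x w : @delta_star A Mq (fq x) w = fq (delta_star x w).
Proof.
elim: w x => [|a w IH] x //=.
rewrite IH; apply: fq_eq.
have h := sequiv_delta (a :: w) (rep_equiv x).
by move=> w'; rewrite h.
Qed.

Lemma Mq_acc : accessible Mq.
Proof.
move=> y; case: (acc (sval y)) => w hw; exists w.
rewrite Mq_delta hw; apply: val_inj => /=; exact: (eqP (svalP y)).
Qed.

Lemma Mq_rec : recognizes Mq L.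
Proof.
move=> w; rewrite -rec /accepts /= Mq_delta /=.
by have := rep_equiv (delta_star (init M) w) [::].
Qed.

Lemma Mq_card (p q : state M) : p != q -> sequiv p q -> #|state Mq| < #|state M|.
Proof.
move=> hpq he; rewrite card_sig -(cardC [pred x | rep x == x]) -addn1 leq_add2l.
apply/card_gt0P.
case hp: (rep p == p); last by exists p; rewrite !inE /= hp.
exists q; rewrite !inE /= -(rep_eq he) (eqP hp); exact: hpq.
Qed.

End Quot.

Lemma minimal_inj M L : minimal_automaton_of M L -> forall p q : state M, sequiv p q -> p = q.
Proof.
case=> acc rec hmin p q he; apply/eqP/negPn/negP => hpq.
have := hmin _ (Mq_acc acc) (Mq_rec rec).
by rewrite leqNgt (Mq_card hpq he).
Qed.


Lemma mu_cnt M L n : recognizes M L ->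
  mu_n L n = ((cnt (final M) (init M) n)%:R / (#|A| ^ n)%:R)%R.
Proof.
move=> rec; rewrite /mu_n cnt_tuple; congr (_%:R / _)%R.
rewrite -sum1_card big_mkcond /=; apply: eq_bigr => w _.
by rewrite inE -rec.
Qed.

Lemma frac0_mono (f g : nat -> nat) : (forall n, f n <= g n) -> frac0 g -> frac0 f.
Proof.
move=> h hg eps he; have [N0 hN0] := hg eps he; exists N0 => n hn.
apply: le_lt_trans (hN0 n hn); rewrite ler_nat; exact: h.
Qed.

Lemma conv_frac M L (hA : 0 < #|A|) : recognizes M L ->
  (converges (mu_n L) 0%R <-> frac0 (cnt (final M) (init M))) /\
  (converges (mu_n L) 1%R <-> frac0 (cnt (predC (final M)) (init M))).
Proof.
move=> rec.
have hP : forall n, (0 < (#|A| ^ n)%:R :> rat)%R by move=> n; rewrite ltr0n expn_gt0 hA.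
have e0 : forall n eps, (`|mu_n L n - 0| < eps)%R =
    ((cnt (final M) (init M) n)%:R < eps * (#|A| ^ n)%:R)%R.
  move=> n eps; rewrite subr0 (mu_cnt n rec) ger0_norm ?divr_ge0 ?ler0n //.
  by rewrite ltr_pdivrMr.
have e1 : forall n eps, (`|mu_n L n - 1| < eps)%R =
    ((cnt (predC (final M)) (init M) n)%:R < eps * (#|A| ^ n)%:R)%R.
  move=> n eps; rewrite (mu_cnt n rec).
  have hs := cnt_compl (final M) (init M) n.
  have -> : ((cnt (final M) (init M) n)%:R / (#|A| ^ n)%:R - 1 =
     - ((cnt (predC (final M)) (init M) n)%:R / (#|A| ^ n)%:R) :> rat)%R.
    rewrite -hs natrD; field; apply: lt0r_neq0; rewrite -natrD hs; exact: hP.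
  by rewrite normrN ger0_norm ?divr_ge0 ?ler0n // ltr_pdivrMr.
split; split => h eps he; have [N0 hN0] := h eps he; exists N0 => n hn.
- by rewrite -e0; exact: hN0.
- by rewrite e0; exact: hN0.
- by rewrite -e1; exact: hN0.
- by rewrite e1; exact: hN0.
Qed.

Lemma QZ_ZO M L (a0 : A) : recognizes M L -> quasi_zero M ->
  converges (mu_n L) 0%R \/ converges (mu_n L) 1%R.
Proof.
move=> rec hq.
have hA : 0 < #|A| by apply/card_gt0P; exists a0.
have [[_ c0] [_ c1]] := conv_frac hA rec.
have hd := decay a0 (init M).
case: hq => hq; [right; apply: c1 | left; apply: c0]; apply: (frac0_mono _ hd) => n;
  apply: cnt_mono => r /=.
- by apply: contra => hU; apply: hq; apply/Ub_sink.
- by case hU: (Ub r) => //; have := hq r (proj2 (Ub_sink r) hU) => /negbTE ->.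
Qed.

Lemma ZO_QZ M L (a0 : A) : accessible M -> recognizes M L ->
  (converges (mu_n L) 0%R \/ converges (mu_n L) 1%R) -> quasi_zero M.
Proof.
move=> acc rec hc.
have hA : 0 < #|A| by apply/card_gt0P; exists a0.
have [[c0 _] [c1 _]] := conv_frac hA rec.
case: hc => hc; [right | left] => q /Ub_sink hq.
- have h := c0 hc.
  have h' : frac0 (cnt (predC (predC (final M))) (init M)).
    by apply: frac0_mono h => n; apply: cnt_mono => r /=; rewrite negbK.
  exact: (H2 a0 acc h' hq).
- exact: (H2 a0 acc (c1 hc) hq).
Qed.

Lemma Z_QZ M : zero_automaton M -> quasi_zero M.
Proof.
case=> [[w [q0 hw]] [s hs]].
have hsd : forall u, delta_star s u = s by elim=> //= a u IH; rewrite hs.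
have e : q0 = s by rewrite -(hw s) hsd.
have hU : forall q, in_sink_union q -> q = s.
  move=> q /Ub_sink hq.
  have : connect (@edge M) q s by apply/reach_connect; exists w; rewrite hw e.
  move/(implyP (forallP hq s))/reach_connect => [u <-]; exact: hsd.
case hf: (final M s); [left | right] => q /hU ->; by rewrite hf.
Qed.

Lemma QZ_Z M L : minimal_automaton_of M L -> quasi_zero M -> zero_automaton M.
Proof.
move=> hmin hq.
have inj := minimal_inj hmin.
have [bb hb] : exists bb, forall q : state M, Ub q -> final M q = bb.
  case: hq => hq; [exists true | exists false] => q /Ub_sink /hq //.
  by move/negbTE.
have [w0 hw0] := reach_Ub (init M).
set s := delta_star (init M) w0 in hw0.
have hUs : forall q, Ub q -> q = s.
  move=> q hq0; apply: inj => w.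
  by rewrite !hb //; apply: Ub_delta.
have hsink : sink_state s by move=> a; apply: hUs; exact: Ub_trans.
split; last by exists s.
have hsd : forall u, delta_star s u = s by elim=> //= a u IH; rewrite hsink.
have gen : forall qs : seq (state M), exists w, forall q, q \in qs -> delta_star q w = s.
  elim=> [|q qs [w IH]]; first by exists [::].
  have [v hv] := reach_Ub (delta_star q w).
  exists (w ++ v) => r; rewrite inE => /orP [/eqP ->|hr].
    by rewrite delta_cat; apply: hUs.
  by rewrite delta_cat IH // hsd.
have [w hw] := gen (enum (state M)).
by exists w, s => p; apply: hw; rewrite mem_enum.
Qed.


Lemma Z_LZ M L : recognizes M L -> zero_automaton M -> language_with_zero L.
Proof.
move=> rec [[w [q0 hw]] [s hs]].
have hsd : forall u, delta_star s u = s by elim=> //= a u IH; rewrite hs.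
have e : q0 = s by rewrite -(hw s) hsd.
exists w => m; split => x y; rewrite -!rec /accepts !delta_cat.
- by rewrite !hw e !hsd.
- by rewrite !hw e !hsd.
Qed.

Lemma LZ_Z M L : minimal_automaton_of M L -> language_with_zero L -> zero_automaton M.
Proof.
move=> hmin [z hz].
have inj := minimal_inj hmin.
case: hmin => acc rec _.
set s := delta_star (init M) z.
have hx : forall x, delta_star (init M) (x ++ z) = s.
  move=> x; apply: inj => w.
  have := (proj2 (hz x)) [::] w; rewrite /= -!rec /accepts -!catA !delta_cat.
  by [].
split.
  exists z, s => p; case: (acc p) => x <-; by rewrite -delta_cat hx.
exists s => a; rewrite /s.
have := inj (delta_star (init M) (z ++ [:: a])) s.
rewrite delta_cat /= => -> //.
move=> w; have := (proj1 (hz [:: a])) [::] w.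
by rewrite /= -!rec /accepts -catA !delta_cat.
Qed.

End S.

Theorem theorem1 (A : finType) (hA : 0 < #|A|) (L : seq A -> bool)
  (hreg : regular L) (ML : dfa A) (hML : minimal_automaton_of ML L) :
  [<-> zero_automaton ML;
       language_with_zero L;
       zero_one_language L;
       exists M : dfa A, [/\ accessible M, recognizes M L & quasi_zero M]].
Proof.
case/card_gt0P: (hA) => a0 _.
have [acc rec _] := hML.
tfae.
- exact: Z_LZ rec.
- move=> hz; split => //; apply: (QZ_ZO a0 rec); apply: Z_QZ; exact: LZ_Z hML hz.
- move=> [_ hc]; exists ML; split => //; exact: ZO_QZ a0 acc rec hc.
- move=> [M [_ recM hq]]; apply: (QZ_Z hML); apply: (ZO_QZ a0 acc rec).
  exact: QZ_ZO a0 recM hq.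
Qed.
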